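(* Let $M$ be a simple $L$-module such that (i) for some $m\ge 1$, either $d^m$ or $u^m$ acts on $M$ as a scalar, and (ii) $M$ contains a weight vector. Then $M$ is finite-dimensional.
   Context: Let $r,s,\gamma\in\mathbb C$ with $rs\neq 0$ and $\phi\in\mathbb C[x]$. The generalized down-up algebra $L=L(\phi,r,s,\gamma)$ is the associative $\mathbb C$-algebra generated by $u,d,h$ subject to $hu-ruh=\gamma u$, $dh-rhd=\gamma d$, $du-sud=\phi(h)$. Modules are left modules. A weight vector of an $L$-module $M$ is a nonzero $v\in M$ with $hv=\lambda v$ and $(ud)v=\beta v$ for some $(\lambda,\beta)\in\mathbb C^2$. *)

(* Defs.v *)
From HB Require Import structures.
From mathcomp Require Import all_boot all_order all_algebra.
Set Implicit Arguments. Unset Strict Implicit. Unset Printing Implicit Defensive.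
Import GRing.Theory Num.Theory.
Local Open Scope ring_scope.

Section LModules.
Variables (F : fieldType) (V : lmodType F).

Definition phi_act (phi : {poly F}) (H : V -> V) (v : V) : V :=
  \sum_(i < size phi) phi`_i *: iter i H v.

(* V with endomorphisms U (for u), D (for d), H (for h) is a module over
   L(phi, r, s, gamma) *)
Definition is_Lmodule (r s g : F) (phi : {poly F}) (U D H : {linear V -> V}) :=
  forall v : V,
  [/\ H (U v) - r *: U (H v) = g *: U v,
      D (H v) - r *: H (D v) = g *: D v &
      D (U v) - s *: U (D v) = phi_act phi H v].

Definition is_submodule (U D H : {linear V -> V}) (P : V -> Prop) :=
  [/\ P 0,
      (forall (a : F) x y, P x -> P y -> P (a *: x + y)) &
      (forall x, P x -> [/\ P (U x), P (D x) & P (H x)])].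

Definition simple_module (U D H : {linear V -> V}) :=
  (exists v : V, v != 0) /\
  forall P : V -> Prop, is_submodule U D H P ->
    (forall x, P x -> x = 0) \/ (forall x, P x).

Definition weight_vector (U D H : {linear V -> V}) (v : V) :=
  v != 0 /\ exists lam beta : F, H v = lam *: v /\ U (D v) = beta *: v.

Definition finite_dim :=
  exists (n : nat) (e : 'I_n -> V),
    forall v : V, exists c : 'I_n -> F, v = \sum_(i < n) c i *: e i.

End LModules.

(* Main.v *)
Require Import Defs.
From HB Require Import structures.
From mathcomp Require Import all_boot all_order all_algebra.
Import GRing.Theory Num.Theory.
Local Open Scope ring_scope.
Set Implicit Arguments. Unset Strict Implicit.

Section Gen.
Variables (F : fieldType) (V : lmodType F).

Lemma iterZ (T : {linear V -> V}) n (a : F) x : iter n T (a *: x) = a *: iter n T x.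
Proof. by elim: n => //= n ->; rewrite linearZZ. Qed.

Lemma iter_eig (T : {linear V -> V}) (mu : F) x : T x = mu *: x ->
  forall n, iter n T x = mu ^+ n *: x.
Proof. move=> hx; elim=> [|n IH] /=; first by rewrite scale1r.
by rewrite IH linearZZ hx scalerA -exprSr. Qed.

Lemma phi_act_eig (phi : {poly F}) (T : {linear V -> V}) mu x : T x = mu *: x ->
  phi_act phi T x = phi.[mu] *: x.
Proof.
move=> hx; rewrite /phi_act horner_coef scaler_suml; apply: eq_bigr => i _.
by rewrite (iter_eig hx) scalerA.
Qed.

Definition span_lt (e : nat -> V) N x := exists c : nat -> F, x = \sum_(i < N) c i *: e i.
Definition spanall e x := exists N, span_lt e N x.

Lemma span_lt0 e N : span_lt e N 0.
Proof. by exists (fun _ => 0); rewrite big1 // => i _; rewrite scale0r. Qed.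

Lemma span_ltD e N a x y : span_lt e N x -> span_lt e N y -> span_lt e N (a *: x + y).
Proof.
move=> [c1 ->] [c2 ->]; exists (fun i => a * c1 i + c2 i).
rewrite scaler_sumr -big_split /=; apply: eq_bigr => i _.
by rewrite scalerDl scalerA.
Qed.

Lemma span_lt_e e N i : (i < N)%N -> span_lt e N (e i).
Proof.
move=> hi; exists (fun j => if j == i then 1 else 0).
rewrite (bigD1 (Ordinal hi)) //= eqxx scale1r big1 ?addr0 // => j hj.
case: eqP => [hji|]; last by rewrite scale0r.
by move: hj; rewrite -(inj_eq val_inj) /= hji eqxx.
Qed.

Lemma span_lt_sum e N (I : Type) (rr : seq I) (P : pred I) (f : I -> V) :
  (forall i, P i -> span_lt e N (f i)) -> span_lt e N (\sum_(i <- rr | P i) f i).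
Proof.
move=> h; apply: (big_ind (span_lt e N)) => //; first exact: span_lt0.
by move=> x y hx hy; rewrite -[x]scale1r; apply: span_ltD.
Qed.

Lemma span_ltZ e N a x : span_lt e N x -> span_lt e N (a *: x).
Proof. by move=> h; rewrite -[_ *: x]addr0; apply: span_ltD => //; apply: span_lt0. Qed.

Lemma span_lt_mono e N M x : (N <= M)%N -> span_lt e N x -> span_lt e M x.
Proof.
move=> hNM [c ->]; exists (fun i => if (i < N)%N then c i else 0).
rewrite (big_ord_widen _ (fun i => c i *: e i) hNM) big_mkcond /=.
by apply: eq_bigr => i _; case: ifP => // _; rewrite scale0r.
Qed.

Lemma spanallD e a x y : spanall e x -> spanall e y -> spanall e (a *: x + y).
Proof.
move=> [N hx] [M hy]; exists (maxn N M); apply: span_ltD.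
  by apply: span_lt_mono hx; rewrite leq_maxl.
by apply: span_lt_mono hy; rewrite leq_maxr.
Qed.

Lemma spanall0 e : spanall e 0.
Proof. by exists 0%N; apply: span_lt0. Qed.

Lemma spanall_e e i : spanall e (e i).
Proof. by exists i.+1; apply: span_lt_e. Qed.

Lemma spanall_sum e (I : Type) (rr : seq I) (P : pred I) (f : I -> V) :
  (forall i, P i -> spanall e (f i)) -> spanall e (\sum_(i <- rr | P i) f i).
Proof.
move=> h; apply: (big_ind (spanall e)) => //; first exact: spanall0.
by move=> x y hx hy; rewrite -[x]scale1r; apply: spanallD.
Qed.

Lemma spanall_lin (T : {linear V -> V}) e :
  (forall i, spanall e (T (e i))) -> forall x, spanall e x -> spanall e (T x).
Proof.
move=> h x [N [c ->]]; rewrite linear_sum; apply: spanall_sum => i _.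
rewrite linearZZ -[_ *: _]addr0; apply: spanallD => //; exact: spanall0.
Qed.

Lemma span_lt_lin (T : {linear V -> V}) e N :
  (forall i, (i < N)%N -> span_lt e N (T (e i))) -> forall x, span_lt e N x -> span_lt e N (T x).
Proof.
move=> h x [c ->]; rewrite linear_sum; apply: span_lt_sum => i _.
by rewrite linearZZ; apply: span_ltZ; apply: h.
Qed.

Lemma finite_of_span e N : (forall x, spanall e x) -> (forall i, span_lt e N (e i)) ->
  finite_dim V.
Proof.
move=> hall he; exists N, (fun i : 'I_N => e i) => v.
have [M [c ->]] := hall v.
have : span_lt e N (\sum_(i < M) c i *: e i).
  by apply: span_lt_sum => i _; apply: span_ltZ.
by move=> [c' ->]; exists (fun i : 'I_N => c' i).
Qed.

Lemma recurrence (A : {linear V -> V}) w N :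
  span_lt (fun i => iter i A w) N (iter N A w) ->
  forall i, span_lt (fun i => iter i A w) N (iter i A w).
Proof.
move=> hN; elim=> [|i [c hc]].
  by case: N hN => [//|N] _; apply: span_lt_e.
rewrite iterS hc linear_sum; apply: span_lt_sum => j _; rewrite linearZZ; apply: span_ltZ.
rewrite -iterS; have := ltn_ord j; rewrite leq_eqVlt => /orP [/eqP hj|hj].
  by rewrite hj.
exact: span_lt_e.
Qed.

Lemma spanallZ e a x : spanall e x -> spanall e (a *: x).
Proof. by move=> h; rewrite -[_ *: x]addr0; apply: spanallD => //; apply: spanall0. Qed.

Lemma relation (e : nat -> V) K : (0 < K)%N -> forall n (f : nat -> F),
  e 0%N = \sum_(i < n) f i *: e (i + K)%N -> exists N, span_lt e N (e N).
Proof.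
move=> hK; elim=> [|n IH] f h.
  by exists 0%N; rewrite h big_ord0; apply: span_lt0.
rewrite big_ord_recr /= in h.
have [fn0|fn0] := eqVneq (f n) 0.
  by apply: (IH f); rewrite h fn0 scale0r addr0.
exists (n + K)%N.
have -> : e (n + K)%N = (f n)^-1 *: ((-1) *: (\sum_(i < n) f i *: e (i + K)%N) + e 0%N).
  by rewrite h scaleN1r addKr scalerA mulVf // scale1r.
apply: span_ltZ; apply: span_ltD.
  apply: span_lt_sum => i _; apply: span_ltZ; apply: span_lt_e.
  by rewrite ltn_add2r.
by apply: span_lt_e; rewrite addn_gt0 hK orbT.
Qed.

Lemma linZ (T : {linear V -> V}) a x : T (a *: x) = a *: T x.
Proof. by rewrite linearZZ. Qed.

End Gen.
Arguments linZ {F V} T a x.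
Arguments span_lt {F V}.
Arguments spanall {F V}.

Section Mod.
Variables (F : numClosedFieldType) (r s g : F) (phi : {poly F})
  (V : lmodType F) (U D H : {linear V -> V}).
Hypotheses (hr : r != 0) (hs : s != 0) (hL : is_Lmodule r s g phi U D H)
  (hS : simple_module U D H).

Definition good (x : V) := [/\ exists l, H x = l *: x, exists b, U (D x) = b *: x &
   exists b, D (U x) = b *: x].

Lemma scale_solve (a b : F) (y z : V) : a != 0 -> a *: z = b *: y -> z = (a^-1 * b) *: y.
Proof. by move=> ha h; rewrite -scalerA -h scalerA mulVf // scale1r. Qed.

Lemma good_U x : good x -> good (U x).
Proof.
move=> [[l hl] [b hb] [b' hb']].
have hH : H (U x) = (g + r * l) *: U x.
  have [h1 _ _] := hL x; move/eqP: h1; rewrite subr_eq => /eqP ->.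
  by rewrite hl (linZ U) scalerA scalerDl.
split; first by exists (g + r * l).
  by exists b'; rewrite hb' (linZ U).
have [_ _ h3] := hL (U x).
rewrite (@phi_act_eig _ _ phi H _ _ hH) hb' (linZ U) in h3. rewrite scalerA in h3.
move/eqP: h3; rewrite subr_eq => /eqP ->.
by exists (phi.[g + r * l] + s * b'); rewrite scalerDl.
Qed.

Lemma good_D x : good x -> good (D x).
Proof.
move=> [[l hl] [b hb] [b' hb']].
have hH : H (D x) = (r^-1 * (l - g)) *: D x.
  have [_ h2 _] := hL x; rewrite hl (linZ D) in h2.
  apply: scale_solve => //.
  by rewrite scalerBl -h2 opprB addrC subrK.
split; first by eexists; exact: hH.
  have [_ _ h3] := hL (D x).
  rewrite (@phi_act_eig _ _ phi H _ _ hH) hb (linZ D) in h3.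
  exists (s^-1 * (b - phi.[r^-1 * (l - g)])); apply: scale_solve => //.
  by rewrite scalerBl -h3 opprB addrC subrK.
by exists b; rewrite hb (linZ D).
Qed.

Lemma weight_good v : weight_vector U D H v -> good v.
Proof.
move=> [_ [l [be [hl hb]]]]; split; [by exists l | by exists be |].
have [_ _ h3] := hL v.
rewrite (@phi_act_eig _ _ phi H _ _ hl) hb scalerA in h3.
move/eqP: h3; rewrite subr_eq => /eqP ->.
by exists (phi.[l] + s * be); rewrite scalerDl.
Qed.

Lemma simple_all (P : V -> Prop) x : is_submodule U D H P -> P x -> x != 0 ->
  forall y, P y.
Proof.
move=> hP hx hx0; case: (hS.2 P hP) => // h.
by move: hx0; rewrite (h x hx) eqxx.
Qed.

Section Ladder.
Variables (A B : {linear V -> V}).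
Hypotheses (hA : forall x, good x -> good (A x)) (hB : forall x, good x -> good (B x))
  (hBA : forall x, good x -> exists b, B (A x) = b *: x)
  (hAB : (forall x, A x = U x /\ B x = D x) \/ (forall x, A x = D x /\ B x = U x)).

Lemma iter_good w : good w -> forall i, good (iter i A w).
Proof. by move=> hw; elim=> //= i IH; apply: hA. Qed.

Lemma ladder_sub w : good w -> spanall (fun i => iter i A w) (B w) ->
  is_submodule U D H (spanall (fun i => iter i A w)).
Proof.
move=> hw hBw.
set e := (fun i => iter i A w).
have cA : forall i, spanall e (A (e i)).
  by move=> i; rewrite /e -iterS; apply: spanall_e.
have cB : forall i, spanall e (B (e i)).
  case=> [//|i]; rewrite /e iterS.
  have [b ->] := hBA (iter_good hw i); apply: spanallZ; apply: spanall_e.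
have cH : forall i, spanall e (H (e i)).
  move=> i; have [[l ->] _ _] := iter_good hw i; apply: spanallZ; apply: spanall_e.
split; [exact: spanall0 | by move=> a x y; apply: spanallD |].
move=> x hx; have hAx := spanall_lin cA hx; have hBx := spanall_lin cB hx.
have hHx := spanall_lin cH hx.
split => //.
  by case: hAB => h; [rewrite -(h x).1 | rewrite -(h x).2].
by case: hAB => h; [rewrite -(h x).2 | rewrite -(h x).1].
Qed.

Lemma ladder_all w : good w -> w != 0 -> spanall (fun i => iter i A w) (B w) ->
  forall y, spanall (fun i => iter i A w) y.
Proof.
move=> hw hw0 hBw; apply: (simple_all (ladder_sub hw hBw) _ hw0).
exact: (@spanall_e _ _ (fun i => iter i A w) 0).
Qed.

Lemma part_unit m c w : (0 < m)%N -> c != 0 -> (forall x, iter m A x = c *: x) ->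
  good w -> w != 0 -> finite_dim V.
Proof.
move=> hm hc hiter hw hw0.
set e := (fun i => iter i A w).
have hBw : spanall e (B w).
  case: m hm hiter => [//|m] _ hiter.
  have -> : w = c^-1 *: iter m.+1 A w by rewrite hiter scalerA mulVf // scale1r.
  rewrite (linZ B) iterS; have [b ->] := hBA (iter_good hw m).
  by apply: spanallZ; apply: spanallZ; apply: spanall_e.
apply: (finite_of_span (e := e) (N := m)); first exact: ladder_all.
apply: recurrence; rewrite hiter; apply: span_ltZ.
exact: (@span_lt_e _ _ (fun i => iter i A w) _ _ hm).
Qed.

Lemma lowest j : forall x, good x -> x != 0 -> iter j B x = 0 ->
  exists w, [/\ good w, w != 0 & B w = 0].
Proof.
elim: j => [|j IH] x hx hx0 /=; first by move=> h; rewrite h eqxx in hx0.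
have [hB0|hB0] := eqVneq (B x) 0; first by exists x.
by move=> h; apply: (IH (B x)) => //; [apply: hB | rewrite -iterSr].
Qed.

Lemma findk w : good w -> w != 0 -> forall j, iter j B (iter j A w) = 0 ->
  exists k, B (iter k.+1 A w) = 0.
Proof.
move=> hw hw0; elim=> [|j IH]; first by move=> /= h; rewrite h eqxx in hw0.
rewrite iterSr iterS; have [b hb] := hBA (iter_good hw j).
rewrite hb iterZ => /eqP; rewrite scaler_eq0 => /orP [/eqP b0|/eqP h].
  by exists j; rewrite iterS hb b0 scale0r.
exact: IH.
Qed.

Lemma part_zero m v : (forall x, iter m B x = 0) -> good v -> v != 0 -> finite_dim V.
Proof.
move=> hm hv hv0.
have [w [hw hw0 hBw]] := lowest hv hv0 (hm v).
pose e := fun i => iter i A w.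
have hall : forall y, spanall e y.
  by apply: ladder_all => //; rewrite hBw; apply: spanall0.
have [k hk] := findk hw hw0 (hm (iter m A w)).
have [x0|x0] := eqVneq (iter k.+1 A w) 0.
  apply: (@finite_of_span _ _ e k.+1 hall); apply: recurrence.
  rewrite x0; exact: span_lt0.
have hx : good (iter k.+1 A w) by apply: iter_good.
have hall' := ladder_all hx x0 (ltac:(rewrite hk; apply: spanall0)).
have [n [f hf]] := hall' w.
have [N hN] : exists N, span_lt e N (e N).
  apply: (@relation _ _ e k.+1 _ n f) => //.
  rewrite /e /= [in LHS]hf; apply: eq_bigr => i _; by rewrite iterD.
by apply: (@finite_of_span _ _ e N hall); apply: recurrence.
Qed.

End Ladder.

Lemma main_in : (exists m : nat, (1 <= m)%N /\ exists c : F,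
      (forall v : V, iter m D v = c *: v) \/ (forall v : V, iter m U v = c *: v)) ->
  (exists v : V, weight_vector U D H v) -> finite_dim V.
Proof.
move=> [m [hm [c hc]]] [v hv].
have hgv := weight_good hv; have hv0 : v != 0 := hv.1.
have hDU : forall x, good x -> exists b, D (U x) = b *: x by move=> x [].
have hUD : forall x, good x -> exists b, U (D x) = b *: x by move=> x [].
have hL1 : forall x, U x = U x /\ D x = D x by [].
have hL2 : forall x, D x = D x /\ U x = U x by [].
case: hc => hc; have [c0|c0] := eqVneq c 0.
- apply: (@part_zero U D good_U good_D hDU (or_introl hL1) m v) => // x.
  by rewrite hc c0 scale0r.
- exact: (@part_unit D U good_D hUD (or_intror hL2) m c v hm c0 hc hgv hv0).
- apply: (@part_zero D U good_D good_U hUD (or_intror hL2) m v) => // x.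
  by rewrite hc c0 scale0r.
- exact: (@part_unit U D good_U hDU (or_introl hL1) m c v hm c0 hc hgv hv0).
Qed.

End Mod.

Unset Implicit Arguments. Set Strict Implicit.

Theorem mainTheorem3 (F : numClosedFieldType) (r s g : F) (phi : {poly F})
  (V : lmodType F) (U D H : {linear V -> V}) :
  r != 0 -> s != 0 ->
  is_Lmodule r s g phi U D H ->
  simple_module U D H ->
  (exists m : nat, (1 <= m)%N /\ exists c : F,
      (forall v : V, iter m D v = c *: v) \/ (forall v : V, iter m U v = c *: v)) ->
  (exists v : V, weight_vector U D H v) ->
  finite_dim V.
Proof. by move=> hr hs hL hS; apply: main_in hL hS. Qed.
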